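(* Let $\phi$ be an absolutely bounded, Lipschitz and internally stable feature map with constants $v_1,v_2,v_3$, let $R=[0,1]^2$, and let $\mathcal{X}$ be a bi-filtration of size $n$. Let $s\in\mathbb{N}$, $u=2^{-s}$, and let $(B_1,B_2)$ be a box pair with centers $c_1<c_2$. Then for all $(p,q)\in B_1\times B_2$ with $p<q$, $$|\Phi_{\mathcal{X}}(p,q)-\Phi_{\mathcal{X}}(c_1,c_2)|\le\frac{v_3 n}{\sqrt2}D+v_1 nW+v_2 nL.$$
   Context: For $p,q\in\mathbb{R}^2$ write $p\le q$ (resp. $p<q$) if both coordinates satisfy $\le$ (resp. $<$). A mono-filtration of a finite simplicial complex $X$ assigns nested subcomplexes $\mathcal{X}(\alpha)$, $\alpha\in\mathbb{R}$; its size is the number of simplices. A bi-filtration $\mathcal{X}$ assigns to $p\in\mathbb{R}^2$ a subcomplex $\mathcal{X}(p)$ with $\mathcal{X}(p)\subseteq\mathcal{X}(q)$ for $p\le q$; it is tame, and its size is the total number of critical points over all simplices (where $p$ is critical for $\sigma$ if for every $\epsilon>0$, $\sigma\notin\mathcal{X}(p_1-\epsilon,p_2)\cup\mathcal{X}(p_1,p_2-\epsilon)$ and $\sigma\in\mathcal{X}(p_1+\epsilon,p_2)\cap\mathcal{X}(p_1,p_2+\epsilon)$); every slice of a bi-filtration of size $n$ has size at most $n$. Let $\mathcal{L}$ be the set of non-vertical lines in $\mathbb{R}^2$ with positive slope (''slices''); each $\ell\in\mathcal{L}$ meets $x=-y$ in a unique point $b$ and is parametrized as $b+\lambda a$ with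 $a=(a_1,a_2)$ its unit direction vector with positive coordinates; its weight is $\hat{\ell}:=\min\{a_1,a_2\}$; for a point $p\in\ell$, $\lambda_p$ denotes the parameter with $p=b+\lambda_pa$; the slice $\mathcal{X}_\ell$ is the mono-filtration $\alpha\mapsto\mathcal{X}(b+\alpha a)$. $d_B$ is the bottleneck distance between persistence diagrams of mono-filtrations. $\Delta^{(1)}:=\{(x_1,x_2):x_1<x_2\}$. A feature map $\phi$ assigns to each mono-filtration $\mathcal{X}$ a function $\phi_{\mathcal{X}}\in L^2(\Delta^{(1)})$; absolutely bounded: $0\le\phi_{\mathcal{X}}(x)\le v_1n$; Lipschitz: $|\phi_{\mathcal{X}}(x)-\phi_{\mathcal{X}}(x')|\le v_2n\|x-x'\|_2$; internally stable: $|\phi_{\mathcal{X}}(x)-\phi_{\mathcal{Y}}(x)|\le v_3n\,d_B(\mathcal{X},\mathcal{Y})$; each for all mono-filtrations of size $n$ and all $x,x'\in\Delta^{(1)}$. $\Delta^{(2)}:=\{(p,q)\in\mathbb{R}^2\times\mathbb{R}^2:p<q\}$; for $(p,q)\in\Delta^{(2)}$ with $\ell$ the line through $p,q$, $\Phi_{\mathcal{X}}(p,q):=\chi_R(p)\chi_R(q)\,\hat{\ell}\,\phi_{\mathcal{X}_\ell}(\lambda_p,\lambda_q)$. Boxes: $R$ is split into $2^s\times2^s$ congruent closed squares of side $u$; a box pair is an ordered pair $(B_1,B_2)$ of such boxes, with centers $c_1,c_2$. A slice $\ell\in\mathcal{L}$ traverses $(B_1,B_2)$ if it meets both $B_1$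 and $B_2$; the center slice $\ell_c$ is the line through $c_1$ and $c_2$. $D$ is the supremum of $d_B(\mathcal{X}_{\ell_c},\mathcal{X}_\ell)$ over all slices $\ell$ traversing $(B_1,B_2)$; $W$ is the supremum of $|\hat{\ell_c}-\hat{\ell}|$ over traversing slices $\ell$; $L_1$ is the supremum of $|\lambda_p-\lambda_{c_1}|$ over traversing slices $\ell$ and points $p\in\ell\cap B_1$ (with $\lambda_p$ along $\ell$ and $\lambda_{c_1}$ along $\ell_c$), $L_2$ is defined likewise with $B_2$ and $c_2$, and $L:=\max\{L_1,L_2\}$. *)

(* Defs.v *)
From HB Require Import structures.
From mathcomp Require Import all_boot all_order all_algebra.
From mathcomp Require Import all_classical all_reals all_analysis.

Set Implicit Arguments.
Unset Strict Implicit.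
Unset Printing Implicit Defensive.
Import Order.TTheory GRing.Theory Num.Theory.
Local Open Scope classical_set_scope.
Local Open Scope ring_scope.

Definition is_complex (V : finType) (K : {set {set V}}) : Prop :=
  (@finset.set0 V) \notin K /\
  forall s t : {set V}, s \in K -> t \subset s -> t != @finset.set0 _ -> t \in K.

Section Homology.
Variables (F : fieldType) (V : finType).

Definition chain := {ffun {set V} -> F^o}.

Definition schain (s : {set V}) : chain := [ffun t => ((t == s)%:R : F)].

(* orientation induced by the order enum_rank on V *)
Definition vpos (s : {set V}) (v : V) : nat :=
  #|[set w in s | (enum_rank w < enum_rank v)%N]|.

Definition bd_simplex (s : {set V}) : chain :=
  if (2 <= #|s|)%N then
    \sum_(v in s) ((-1) ^+ vpos s v : F) *: schain (s :\ v)
  else 0.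

Definition bd (c : chain) : chain := \sum_(s : {set V}) c s *: bd_simplex s.

(* k-chains supported on the k-simplices (k+1 vertices) of A *)
Definition Cspace (k : nat) (A : {set {set V}}) : {vspace chain} :=
  <<[seq schain s | s <- seq.filter (fun s : {set V} => #|s| == k.+1) (enum A)]>>%VS.

Definition Zspace (k : nat) (A : {set {set V}}) : {vspace chain} :=
  (Cspace k A :&: lker (linfun bd))%VS.

Definition Bspace (k : nat) (B : {set {set V}}) : {vspace chain} :=
  <<[seq bd (schain s) | s <- seq.filter (fun s : {set V} => #|s| == k.+2) (enum B)]>>%VS.

(* rank of the map H_k(A) -> H_k(B) induced by inclusion (A \subset B) *)
Definition prank (k : nat) (A B : {set {set V}}) : nat :=
  (\dim (Zspace k A) - \dim (Zspace k A :&: Bspace k B))%N.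
End Homology.

(* Mono-filtrations: a finite simplicial complex K with entry values  *)
(* f, the subcomplex at alpha being {s in K | f s <= alpha}.          *)
Record monofilt (R : realType) (V : finType) := MonoFilt {
  mK : {set {set V}};
  mf : {set V} -> R }.

Section Mono.
Variables (R : realType) (V : finType).
Implicit Type Y : monofilt R V.

Definition valid_monofilt Y : Prop :=
  is_complex (mK Y) /\
  forall s t : {set V}, s \in mK Y -> t \subset s -> t != @finset.set0 _ -> mf Y t <= mf Y s.

Definition msub Y (a : R) := [set s in mK Y | mf Y s <= a].
Definition mlt Y (a : R) := [set s in mK Y | mf Y s < a].

Definition msize Y : nat := #|mK Y|.

Definition mvals Y : seq R := undup [seq mf Y s | s <- enum (mK Y)].

(* persistence diagram in homology degree k, coefficients in F:
   the multiset of points (birth, death), death possibly +oo *)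
Definition pd_mult (F : fieldType) (k : nat) Y (a b : R) : nat :=
  ((prank F k (msub Y a) (mlt Y b) + prank F k (mlt Y a) (msub Y b))
   - (prank F k (mlt Y a) (mlt Y b) + prank F k (msub Y a) (msub Y b)))%N.

Definition pd_ess (F : fieldType) (k : nat) Y (a : R) : nat :=
  (prank F k (msub Y a) (mK Y) - prank F k (mlt Y a) (mK Y))%N.

Definition pdiagram (F : fieldType) (k : nat) Y : seq (R * \bar R) :=
  flatten [seq nseq (pd_mult F k Y ab.1 ab.2) (ab.1, (ab.2)%:E)
          | ab <- seq.filter (fun ab : R * R => ab.1 < ab.2)
                  [seq (a, b) | a <- mvals Y, b <- mvals Y]]
  ++ flatten [seq nseq (pd_ess F k Y a) (a, +oo%E) | a <- mvals Y].
End Mono.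

Section Bottleneck.
Variable R : realType.

Definition pt_close (d : R) (p q : R * \bar R) : Prop :=
  `|p.1 - q.1| <= d /\
  ((p.2 = +oo%E /\ q.2 = +oo%E) \/
   exists d1 d2 : R, p.2 = d1%:E /\ q.2 = d2%:E /\ `|d1 - d2| <= d).

(* L_infty distance to the diagonal is at most d *)
Definition diag_close (d : R) (p : R * \bar R) : Prop :=
  exists e : R, p.2 = e%:E /\ (e - p.1) / 2 <= d.

Definition pt0 : R * \bar R := (0, 0%:E).

Definition dmatching (d : R) (P Q : seq (R * \bar R)) : Prop :=
  exists M : seq (nat * nat),
    uniq (unzip1 M) /\ uniq (unzip2 M) /\
    (forall ij, ij \in M ->
       [/\ (ij.1 < size P)%N, (ij.2 < size Q)%N &
           pt_close d (nth pt0 P ij.1) (nth pt0 Q ij.2)]) /\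
    (forall i, (i < size P)%N -> i \notin unzip1 M -> diag_close d (nth pt0 P i)) /\
    (forall j, (j < size Q)%N -> j \notin unzip2 M -> diag_close d (nth pt0 Q j)).

Definition bottleneck (P Q : seq (R * \bar R)) : \bar R :=
  ereal_inf [set (d%:E)%E | d in [set d : R | 0 <= d /\ dmatching d P Q]].
End Bottleneck.

Definition dB (R : realType) (F : fieldType) (k : nat) (V1 V2 : finType)
  (Y1 : monofilt R V1) (Y2 : monofilt R V2) : \bar R :=
  bottleneck (pdiagram F k Y1) (pdiagram F k Y2).

Definition featmap (R : realType) :=
  forall V : finType, monofilt R V -> R * R -> R.

Definition Delta1 (R : realType) : set (R * R) := [set x | x.1 < x.2].

Definition is_feature_map (R : realType) (phi : featmap R) : Prop :=
  forall (V : finType) (Y : monofilt R V), valid_monofilt Y ->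
    measurable_fun (@Delta1 R) (phi V Y) /\
    ((@lebesgue_measure R) \x (@lebesgue_measure R))%E.-integrable (@Delta1 R)
        (fun x => ((phi V Y x) ^+ 2)%:E).

Definition abs_bounded (R : realType) (phi : featmap R) (v1 : R) : Prop :=
  forall (V : finType) (Y : monofilt R V), valid_monofilt Y ->
    forall x, @Delta1 R x -> 0 <= phi V Y x <= v1 * (msize Y)%:R.

Definition norm2 (R : realType) (x : R * R) : R := Num.sqrt (x.1 ^+ 2 + x.2 ^+ 2).

Definition lipschitz_fm (R : realType) (phi : featmap R) (v2 : R) : Prop :=
  forall (V : finType) (Y : monofilt R V), valid_monofilt Y ->
    forall x x', @Delta1 R x -> @Delta1 R x' ->
      `|phi V Y x - phi V Y x'| <= v2 * (msize Y)%:R * norm2 (x.1 - x'.1, x.2 - x'.2).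

Definition int_stable (R : realType) (F : fieldType) (k : nat) (phi : featmap R) (v3 : R) :
  Prop :=
  forall (V1 V2 : finType) (Y1 : monofilt R V1) (Y2 : monofilt R V2),
    valid_monofilt Y1 -> valid_monofilt Y2 -> msize Y1 = msize Y2 ->
    forall x, @Delta1 R x ->
      ((`|phi V1 Y1 x - phi V2 Y2 x|)%:E <= (v3 * (msize Y1)%:R)%:E * dB F k Y1 Y2)%E.

Definition leR2 (R : realType) (p q : R * R) : bool := (p.1 <= q.1) && (p.2 <= q.2).
Definition ltR2 (R : realType) (p q : R * R) : bool := (p.1 < q.1) && (p.2 < q.2).

(* A tame bi-filtration, given by a finite complex K and, for every simplex,
   the (finite) list of its critical points: X(p) = {s | some crit. point <= p} *)
Record bifilt (R : realType) (V : finType) := BiFilt {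
  bK : {set {set V}};
  bcrit : {set V} -> seq (R * R) }.

Section Bi.
Variables (R : realType) (V : finType).
Implicit Type X : bifilt R V.

Definition bX X (p : R * R) : {set {set V}} :=
  [set s in bK X | has (fun c => leR2 c p) (bcrit X s)].

Definition critical X (s : {set V}) (p : R * R) : Prop :=
  forall e : R, 0 < e ->
    s \notin bX X (p.1 - e, p.2) :|: bX X (p.1, p.2 - e) /\
    s \in bX X (p.1 + e, p.2) :&: bX X (p.1, p.2 + e).

Definition valid_bifilt X : Prop :=
  is_complex (bK X) /\
  (forall p, forall s t : {set V}, s \in bX X p -> t \subset s -> t != @finset.set0 _ -> t \in bX X p) /\
  (forall s, uniq (bcrit X s)) /\
  (forall s, s \notin bK X -> bcrit X s = [::]) /\
  (forall s p, p \in bcrit X s <-> critical X s p).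

Definition bsize X : nat := (\sum_(s in bK X) size (bcrit X s))%N.

Definition is_slice (b a : R * R) : Prop :=
  b.1 = - b.2 /\ 0 < a.1 /\ 0 < a.2 /\ a.1 ^+ 2 + a.2 ^+ 2 = 1.

Definition lpt (b a : R * R) (l : R) : R * R := (b.1 + l * a.1, b.2 + l * a.2).

Definition on_line (b a p : R * R) : Prop := exists l, p = lpt b a l.

Definition weight (a : R * R) : R := Num.min a.1 a.2.

(* lambda_p for p on the slice with direction a (b lies on x = -y) *)
Definition lam (a p : R * R) : R := (p.1 + p.2) / (a.1 + a.2).

Definition slice X (b a : R * R) : monofilt R V :=
  MonoFilt [set s in bK X | bcrit X s != [::]]
           (fun s => inf [set l : R | s \in bX X (lpt b a l)]).

Definition ldir (p q : R * R) : R * R :=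
  let N := norm2 (q.1 - p.1, q.2 - p.2) in ((q.1 - p.1) / N, (q.2 - p.2) / N).
Definition lbase (p q : R * R) : R * R :=
  lpt p (ldir p q) (- lam (ldir p q) p).

Definition unit_sq : set (R * R) := [set p | 0 <= p.1 <= 1 /\ 0 <= p.2 <= 1].
Definition chiR (p : R * R) : R := if `[< unit_sq p >] then 1 else 0.

Definition Phi (phi : featmap R) X (p q : R * R) : R :=
  chiR p * chiR q * weight (ldir p q)
  * phi V (slice X (lbase p q) (ldir p q)) (lam (ldir p q) p, lam (ldir p q) q).

Definition side (s : nat) : R := (2 ^+ s)^-1.
Definition gbox (s : nat) (i j : 'I_(2 ^ s)) : set (R * R) :=
  [set p | i%:R * side s <= p.1 <= i.+1%:R * side s /\
           j%:R * side s <= p.2 <= j.+1%:R * side s].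
Definition gcenter (s : nat) (i j : 'I_(2 ^ s)) : R * R :=
  ((i%:R + 2^-1) * side s, (j%:R + 2^-1) * side s).

Definition traverses (B1 B2 : set (R * R)) (b a : R * R) : Prop :=
  is_slice b a /\ (exists l, B1 (lpt b a l)) /\ (exists l, B2 (lpt b a l)).

Definition Dsup (F : fieldType) (k : nat) X (B1 B2 : set (R * R)) (c1 c2 : R * R)
  : \bar R :=
  ereal_sup [set x | exists b a, traverses B1 B2 b a /\
     x = dB F k (slice X (lbase c1 c2) (ldir c1 c2)) (slice X b a)].

Definition Wsup (B1 B2 : set (R * R)) (c1 c2 : R * R) : \bar R :=
  ereal_sup [set x | exists b a, traverses B1 B2 b a /\
     x = (`|weight (ldir c1 c2) - weight a|)%:E].

Definition Lsup_i (B1 B2 B : set (R * R)) (c1 c2 c : R * R) : \bar R :=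
  ereal_sup [set x | exists b a p, traverses B1 B2 b a /\ B p /\ on_line b a p /\
     x = (`|lam a p - lam (ldir c1 c2) c|)%:E].

Definition Lsup (B1 B2 : set (R * R)) (c1 c2 : R * R) : \bar R :=
  maxe (Lsup_i B1 B2 B1 c1 c2 c1) (Lsup_i B1 B2 B2 c1 c2 c2).
End Bi.

(* Main.v *)
Require Import Defs.
From HB Require Import structures.
From mathcomp Require Import all_boot all_order all_algebra.
From mathcomp Require Import all_classical all_reals all_analysis.
From mathcomp Require Import ring lra.
Import Order.TTheory GRing.Theory Num.Theory.
Local Open Scope classical_set_scope.
Local Open Scope ring_scope.
Set Implicit Arguments.
Unset Strict Implicit.

Section Aux.
Variables (R : realType) (V : finType).

Lemma seq_lb (T : eqType) (f : T -> R) (cs : seq T) :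
  exists m, forall c, c \in cs -> m <= f c.
Proof.
elim: cs => [|c cs [m Hm]]; first by exists 0.
exists (Num.min (f c) m) => c'; rewrite in_cons => /orP[/eqP->|/Hm H].
  by rewrite ge_min lexx.
by rewrite ge_min H orbT.
Qed.

Lemma slice_size (X : bifilt R V) b a : (msize (slice X b a) <= bsize X)%N.
Proof.
rewrite /msize /bsize /=.
rewrite -sum1_card.
rewrite [X in (_ <= X)%N](bigID (fun s => bcrit X s != [::])) /=.
apply: leq_trans (leq_addr _ _).
rewrite big_mkcond /= [X in (_ <= X)%N]big_mkcond /=.
apply: leq_sum => s _.
rewrite inE; case: (s \in bK X) => //=; case: (bcrit X s) => //.
Qed.

Lemma slice_valid (X : bifilt R V) b a : valid_bifilt X -> 0 < a.1 -> 0 < a.2 ->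
  valid_monofilt (slice X b a).
Proof.
move=> [[K0 _] [Hcl _]] a1 a2.
have memK s : (s \in mK (slice X b a)) = (s \in bK X) && (bcrit X s != [::]).
  by rewrite /= inE.
have inbX c s : s \in bK X -> c \in bcrit X s -> s \in bX X c.
  move=> sK cs; rewrite inE sK /=; apply/hasP; exists c => //.
  by rewrite /leR2 !lexx.
split; first split.
- by rewrite memK (negbTE K0).
- move=> s t; rewrite !memK => /andP[sK]; case E: (bcrit X s) => [|c cs] // _ ts t0.
  have cin : c \in bcrit X s by rewrite E mem_head.
  have := Hcl c s t (inbX c s sK cin) ts t0.
  rewrite inE => /andP[-> /hasP[c' c'in _]] /=.
  by apply/eqP => E'; rewrite E' in c'in.
- move=> s t; rewrite memK => /andP[sK]; case E: (bcrit X s) => [|c cs] // _ ts t0 /=.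
  apply: lb_le_inf.
  + exists (`|c.1 - b.1| / a.1 + `|c.2 - b.2| / a.2).
    rewrite /= inE sK /=; apply/hasP; exists c; first by rewrite E mem_head.
    rewrite /leR2 /lpt /=; apply/andP; split.
    * rewrite mulrDl mulfVK ?gt_eqF //.
      have : 0 <= `|c.2 - b.2| / a.2 * a.1 by rewrite mulr_ge0 // ?divr_ge0 // ltW.
      have := ler_norm (c.1 - b.1); lra.
    * rewrite mulrDl mulfVK ?gt_eqF //.
      have : 0 <= `|c.1 - b.1| / a.1 * a.2 by rewrite mulr_ge0 // ?divr_ge0 // ltW.
      have := ler_norm (c.2 - b.2); lra.
  + move=> l Hl; apply: ge_inf; last first.
      have := Hcl _ s t Hl ts t0; done.
    have [m Hm] := @seq_lb _ (fun c : R * R => (c.1 - b.1) / a.1) (bcrit X t).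
    exists m => l'; rewrite /= inE => /andP[_ /hasP[c' c'in]].
    rewrite /leR2 /lpt /= => /andP[h1 _].
    apply: le_trans (Hm c' c'in) _.
    by rewrite ler_pdivrMr // ; lra.
Qed.

Lemma ldir_props (p q : R * R) : ltR2 p q ->
  0 < (ldir p q).1 /\ 0 < (ldir p q).2 /\ (ldir p q).1 ^+ 2 + (ldir p q).2 ^+ 2 = 1.
Proof.
case: p q => [p1 p2] [q1 q2]; rewrite /ltR2 /= => /andP[h1 h2].
rewrite /ldir /norm2 /=.
set N := Num.sqrt _.
have hN : 0 < N by rewrite sqrtr_gt0; nra.
have hN2 : N ^+ 2 = (q1 - p1) ^+ 2 + (q2 - p2) ^+ 2 by rewrite sqr_sqrtr //; nra.
split; first by rewrite divr_gt0 // subr_gt0.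
split; first by rewrite divr_gt0 // subr_gt0.
rewrite !expr_div_n -mulrDl -hN2 divff // expf_neq0 // gt_eqF //.
Qed.

Lemma lpt_lbase_p (p q : R * R) : lpt (lbase p q) (ldir p q) (lam (ldir p q) p) = p.
Proof. by case: p => p1 p2; rewrite /lpt /lbase /=; congr (_, _); ring. Qed.

Lemma lpt_lbase_q (p q : R * R) : ltR2 p q ->
  lpt (lbase p q) (ldir p q) (lam (ldir p q) q) = q.
Proof.
move=> hpq; have [a1 [a2 _]] := ldir_props hpq.
move: hpq a1 a2; case: p q => [p1 p2] [q1 q2]; rewrite /ltR2 /= => /andP[h1 h2].
rewrite /lpt /lbase /lam /ldir /norm2 /=.
set N := Num.sqrt _ => a1 a2.
have hN : N != 0 by apply/negP => /eqP E; move: a1; rewrite E invr0 mulr0 ltxx.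
have hS : (q1 - p1) / N + (q2 - p2) / N != 0 by rewrite gt_eqF // addr_gt0.
have hS' : (q1 - p1) + (q2 - p2) != 0 by rewrite gt_eqF //; lra.
congr (_, _); field; rewrite ?hN ?hS //= -mulrDl mulf_neq0 // invr_eq0.
Qed.

Lemma lbase_slice (p q : R * R) : ltR2 p q -> is_slice (lbase p q) (ldir p q).
Proof.
move=> hpq; have [a1 [a2 a3]] := ldir_props hpq.
have hS : (ldir p q).1 + (ldir p q).2 != 0 by rewrite gt_eqF // addr_gt0.
split => //; rewrite /lbase; move: hS; generalize (ldir p q) => a hS.
by rewrite /lpt /lam /=; field.
Qed.

Lemma lam_lt (a p q : R * R) : 0 < a.1 -> 0 < a.2 -> ltR2 p q -> lam a p < lam a q.
Proof.
move=> a1 a2 /andP[h1 h2]; rewrite /lam ltr_pM2r ?invr_gt0 ?addr_gt0 //; lra.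
Qed.

Lemma weight_props (a : R * R) : 0 < a.1 -> 0 < a.2 -> a.1 ^+ 2 + a.2 ^+ 2 = 1 ->
  0 <= weight a /\ 2 * weight a ^+ 2 <= 1.
Proof.
move=> a1 a2 a3; rewrite /weight.
have w0 : 0 <= Num.min a.1 a.2 by rewrite le_min !ltW.
have w1 : Num.min a.1 a.2 <= a.1 by rewrite ge_min lexx.
have w2 : Num.min a.1 a.2 <= a.2 by rewrite ge_min lexx orbT.
split => //; nra.
Qed.

Lemma gbox_unit s (i j : 'I_(2 ^ s)) x : @gbox R s i j x -> unit_sq x.
Proof.
have sp : 0 < side R s by rewrite /side invr_gt0 exprn_gt0.
have hle (k : 'I_(2 ^ s)) : k.+1%:R * side R s <= 1.
  rewrite /side ler_pdivrMr ?exprn_gt0 // mul1r -natrX ler_nat; exact: ltn_ord.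
move=> [/andP[x1 x2] /andP[y1 y2]]; split; apply/andP; split.
- by apply: le_trans x1; rewrite mulr_ge0 // ltW.
- exact: le_trans x2 (hle i).
- by apply: le_trans y1; rewrite mulr_ge0 // ltW.
- exact: le_trans y2 (hle j).
Qed.

Lemma gcenter_in s (i j : 'I_(2 ^ s)) : @gbox R s i j (@gcenter R s i j).
Proof.
have sp : 0 < side R s by rewrite /side invr_gt0 exprn_gt0.
rewrite /gbox /gcenter /=; split; apply/andP; split;
  rewrite ler_pM2r // -?natr1 ?lerDl ?lerD2l // invf_le1; lra.
Qed.

Lemma chi1 s (i j : 'I_(2 ^ s)) x : @gbox R s i j x -> chiR x = 1.
Proof. by move=> /gbox_unit h; rewrite /chiR asboolT. Qed.

End Aux.

Theorem lemma1 (R : realType) (F : fieldType) (k : nat) (phi : featmap R)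
  (v1 v2 v3 : R) (V : finType) (X : bifilt R V) (n s : nat)
  (i1 j1 i2 j2 : 'I_(2 ^ s)) :
  0 <= v1 -> 0 <= v2 -> 0 <= v3 ->
  is_feature_map phi -> abs_bounded phi v1 -> lipschitz_fm phi v2 ->
  int_stable F k phi v3 ->
  valid_bifilt X -> bsize X = n ->
  ltR2 (@gcenter R s i1 j1) (@gcenter R s i2 j2) ->
  forall p q : R * R, @gbox R s i1 j1 p -> @gbox R s i2 j2 q -> ltR2 p q ->
    ((`|Phi phi X p q - Phi phi X (@gcenter R s i1 j1) (@gcenter R s i2 j2)|)%:E
     <= (v3 * n%:R / Num.sqrt 2)%:E
          * Dsup F k X (@gbox R s i1 j1) (@gbox R s i2 j2) (@gcenter R s i1 j1) (@gcenter R s i2 j2)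
        + (v1 * n%:R)%:E
          * Wsup (@gbox R s i1 j1) (@gbox R s i2 j2) (@gcenter R s i1 j1) (@gcenter R s i2 j2)
        + (v2 * n%:R)%:E
          * Lsup (@gbox R s i1 j1) (@gbox R s i2 j2) (@gcenter R s i1 j1) (@gcenter R s i2 j2))%E.
Proof.
move=> hv1 hv2 hv3 _ hab hlip hst hX hn hc p q hp hq hpq.
have hc1 := gcenter_in R i1 j1; have hc2 := gcenter_in R i2 j2.
set c1 := gcenter R i1 j1 in hc hc1 *; set c2 := gcenter R i2 j2 in hc hc2 *.
set B1 := gbox i1 j1 in hp hc1 *; set B2 := gbox i2 j2 in hq hc2 *.
have [al1 [al2 al3]] := ldir_props hpq.
have [ac1 [ac2 ac3]] := ldir_props hc.
have Hlp := lpt_lbase_p p q; have Hlq := lpt_lbase_q hpq.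
have Hsl := lbase_slice hpq.
have Htr : traverses B1 B2 (lbase p q) (ldir p q).
  split => //; split; [exists (lam (ldir p q) p); rewrite Hlp //
                      |exists (lam (ldir p q) q); rewrite Hlq //].
have Hxl : Delta1 (lam (ldir p q) p, lam (ldir p q) q) by exact: lam_lt.
have Hxc : Delta1 (lam (ldir c1 c2) c1, lam (ldir c1 c2) c2) by exact: lam_lt.
have [wl0 _] := weight_props al1 al2 al3.
have [wc0 wc2] := weight_props ac1 ac2 ac3.
have vYl := slice_valid (lbase p q) hX al1 al2.
have vYc := slice_valid (lbase c1 c2) hX ac1 ac2.
have msz : (msize (slice X (lbase c1 c2) (ldir c1 c2)))%:R <= n%:R :> R.
  by rewrite ler_nat -hn slice_size.
have msz' : (msize (slice X (lbase p q) (ldir p q)))%:R <= n%:R :> R.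
  by rewrite ler_nat -hn slice_size.
have -> : Phi phi X p q = weight (ldir p q) *
    phi V (slice X (lbase p q) (ldir p q)) (lam (ldir p q) p, lam (ldir p q) q).
  by rewrite /Phi (chi1 hp) (chi1 hq) !mul1r.
have -> : Phi phi X c1 c2 = weight (ldir c1 c2) *
    phi V (slice X (lbase c1 c2) (ldir c1 c2)) (lam (ldir c1 c2) c1, lam (ldir c1 c2) c2).
  by rewrite /Phi (chi1 hc1) (chi1 hc2) !mul1r.
have HA := hab _ _ vYl _ Hxl.
have HBA := hst _ _ _ _ vYc vYl erefl _ Hxl.
have HBC := hlip _ _ vYc _ _ Hxl Hxc.
move: HA HBA HBC.
set Yl := slice X (lbase p q) (ldir p q).
set Yc := slice X (lbase c1 c2) (ldir c1 c2).
set A := phi V Yl _; set B := phi V Yc (lam _ p, _); set C := phi V Yc (lam _ c1, _).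
set wl := weight (ldir p q); set wc := weight (ldir c1 c2).
move=> /andP[A0 A1] HBA HBC.
have Htri : `|wl * A - wc * C| <= `|wc - wl| * A + wc * `|B - A| + wc * `|B - C|.
  have -> : wl * A - wc * C = (wl - wc) * A + wc * (A - B) + wc * (B - C) by ring.
  apply: le_trans (ler_normD _ _) _; apply: lerD; last by rewrite normrM ger0_norm.
  apply: le_trans (ler_normD _ _) _; rewrite !normrM (ger0_norm A0) (ger0_norm wc0).
  by rewrite distrC [`|A - B|]distrC.
apply: le_trans (_ : ((wc * `|B - A|)%:E + (`|wc - wl| * A)%:E + (wc * `|B - C|)%:E
   <= _)%E); first by rewrite -!EFinD lee_fin [X in _ <= X + _]addrC.
apply: leeD; first apply: leeD.
-
  have dB0 : (0 <= dB F k Yc Yl)%E.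
    rewrite /dB /bottleneck; apply: le_ereal_inf_tmp => x [d [d0 _] <-].
    by rewrite lee_fin.
  have hwc : wc <= (Num.sqrt 2)^-1.
    have s2 : 0 < Num.sqrt 2 :> R by rewrite sqrtr_gt0.
    rewrite -[(Num.sqrt 2)^-1]mul1r ler_pdivlMr //.
    have h2 : Num.sqrt 2 ^+ 2 = 2 :> R by rewrite sqr_sqrtr.
    have : 0 <= wc * Num.sqrt 2 by rewrite mulr_ge0 // ltW.
    have : (wc * Num.sqrt 2) ^+ 2 <= 1 by rewrite exprMn h2 mulrC.
    move: (wc * Num.sqrt 2) => y y1 y0; nra.
  rewrite EFinM.
  apply: le_trans (lee_wpmul2l _ HBA) _; first by rewrite lee_fin.
  rewrite muleA -EFinM.
  apply: le_trans (lee_wpmul2r dB0 (_ : ((wc * (v3 * (msize Yc)%:R))%:E <= (v3 * n%:R / Num.sqrt 2)%:E)%E)) _.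
    rewrite lee_fin [X in _ <= X]mulrC; apply: ler_pM => //.
    - by rewrite mulr_ge0.
    - by rewrite ler_wpM2l.
  apply: lee_wpmul2l; first by rewrite lee_fin !mulr_ge0 // ?invr_ge0 sqrtr_ge0.
  apply: ereal_sup_ubound; exists (lbase p q), (ldir p q); split => //.
-
  rewrite mulrC EFinM; apply: le_trans (_ : ((v1 * n%:R)%:E * (`|wc - wl|)%:E <= _)%E).
    rewrite -EFinM lee_fin ler_wpM2r //.
    apply: le_trans A1 _; by rewrite ler_wpM2l.
  apply: lee_wpmul2l; first by rewrite lee_fin mulr_ge0.
  apply: ereal_sup_ubound; exists (lbase p q), (ldir p q); split => //.
-
  move: HBC; rewrite /norm2 /=.
  set dx := lam (ldir p q) p - lam (ldir c1 c2) c1.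
  set dy := lam (ldir p q) q - lam (ldir c1 c2) c2.
  move=> HBC.
  set M := Num.max `|dx| `|dy|.
  have Mx : `|dx| <= M by rewrite le_max lexx.
  have My : `|dy| <= M by rewrite le_max lexx orbT.
  have hM : wc * Num.sqrt (dx ^+ 2 + dy ^+ 2) <= M.
    have N0 : 0 <= Num.sqrt (dx ^+ 2 + dy ^+ 2) := sqrtr_ge0 _.
    have hx : dx ^+ 2 <= M ^+ 2.
      rewrite -real_normK ?num_real //; have := normr_ge0 dx; nra.
    have hy : dy ^+ 2 <= M ^+ 2.
      rewrite -real_normK ?num_real //; have := normr_ge0 dy; nra.
    have M0 : 0 <= M by apply: le_trans Mx.
    have : (wc * Num.sqrt (dx ^+ 2 + dy ^+ 2)) ^+ 2 <= M ^+ 2.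
      rewrite exprMn sqr_sqrtr ?addr_ge0 ?sqr_ge0 //.
      have a0 : 0 <= wc ^+ 2 by rewrite sqr_ge0.
      have m0 : 0 <= M ^+ 2 by rewrite sqr_ge0.
      have e1 : 0 <= wc ^+ 2 * (M ^+ 2 - dx ^+ 2) by rewrite mulr_ge0 // subr_ge0.
      have e2 : 0 <= wc ^+ 2 * (M ^+ 2 - dy ^+ 2) by rewrite mulr_ge0 // subr_ge0.
      have e3 : 0 <= (1 - 2 * wc ^+ 2) * M ^+ 2 by rewrite mulr_ge0 // subr_ge0.
      move: a0 m0 e1 e2 e3 wc2; move: (wc ^+ 2) (M ^+ 2) (dx ^+ 2) (dy ^+ 2) => a m u v.
      nra.
    have : 0 <= wc * Num.sqrt (dx ^+ 2 + dy ^+ 2) by rewrite mulr_ge0.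
    move: (wc * _) => y; nra.
  have H3 : wc * `|B - C| <= v2 * n%:R * M.
    apply: le_trans (ler_wpM2l wc0 HBC) _.
    set N := Num.sqrt _ in hM *.
    have -> : wc * (v2 * (msize Yc)%:R * N) = (v2 * (msize Yc)%:R) * (wc * N) by ring.
    apply: ler_pM.
    - by rewrite mulr_ge0.
    - by rewrite mulr_ge0 // sqrtr_ge0.
    - by rewrite ler_wpM2l.
    - exact: hM.
  apply: le_trans (_ : (((v2 * n%:R)%:E * M%:E) <= _)%E).
    by rewrite -EFinM lee_fin.
  apply: lee_wpmul2l; first by rewrite lee_fin mulr_ge0.
  rewrite /Lsup /M EFin_max ge_max; apply/andP; split; rewrite le_max; apply/orP; [left|right].
  + apply: ereal_sup_ubound; exists (lbase p q), (ldir p q), p; split => //; split => //.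
    by split => //; exists (lam (ldir p q) p).
  + apply: ereal_sup_ubound; exists (lbase p q), (ldir p q), q; split => //; split => //.
    by split => //; exists (lam (ldir p q) q).
Qed.
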